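(* Let $\delta=(\delta_0,\dots,\delta_h)$ with $h\ge2$ be a characteristic $\delta$-sequence and let $k$ be an integer with $2\le k\le h$. Then (i) $\delta_k+M_k\in\Gamma(\delta_1,\dots,\delta_{k-1})$; (ii) $\delta_k+M_k-\delta_0\notin\Gamma(\delta_0,\dots,\delta_{k-1})$.
   Context: For a set $A$ of integers, $\Gamma(A)$ is the additive semigroup (containing $0$) generated by $A$. A characteristic $\delta$-sequence (in the sense of Abhyankar–Moh) is a sequence of positive integers $\delta_0,\dots,\delta_h$ such that, with $d_i=\gcd(\delta_0,\dots,\delta_{i-1})$ for $1\le i\le h+1$: $d_{h+1}=1$ and $d_i>d_{i+1}$ for $1\le i\le h$; $\delta_i\frac{d_i}{d_{i+1}}\in\Gamma(\delta_0,\dots,\delta_{i-1})$ for $1\le i\le h$; and $\delta_0>\delta_1$, $\delta_i\frac{d_i}{d_{i+1}}>\delta_{i+1}$ for $1\le i\le h-1$. The $q$- and $M$-sequences are defined by $M_1=-\delta_1$ and, for $i=2,\dots,h$, $q_i=\delta_{i-1}\frac{d_{i-1}}{d_i}-\delta_i$, $M_i=M_{i-1}+q_i$. *)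

(* Defs.v *)
(* Sequences delta : nat -> nat, only indices 0..h matter. *)
From mathcomp Require Import all_boot all_order all_algebra.
Set Implicit Arguments. Unset Strict Implicit. Unset Printing Implicit Defensive.
Import GRing.Theory Num.Theory.

(* membership of an integer z in Gamma(delta_lo, ..., delta_{hi-1}):
   z is a nonnegative integer combination of these terms (0 included). *)
Definition inGamma (delta : nat -> nat) (lo hi : nat) (z : int) : Prop :=
  exists c : nat -> nat, z = Posz (\sum_(lo <= i < hi) c i * delta i)%N.

Definition dseq (delta : nat -> nat) (i : nat) : nat :=
  \big[gcdn/0%N]_(j < i) delta j.

Definition char_delta_seq (delta : nat -> nat) (h : nat) : Prop :=
  (forall i, (i <= h)%N -> (0 < delta i)%N) /\
      dseq delta h.+1 = 1%N /\
      (forall i, (1 <= i <= h)%N -> (dseq delta i.+1 < dseq delta i)%N) /\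
      (forall i, (1 <= i <= h)%N ->
         inGamma delta 0 i (Posz (delta i * (dseq delta i %/ dseq delta i.+1)))) /\
      (delta 1 < delta 0)%N /\
      (forall i, (1 <= i <= h.-1)%N ->
         (delta i.+1 < delta i * (dseq delta i %/ dseq delta i.+1))%N).

Definition qseq (delta : nat -> nat) (i : nat) : int :=
  (Posz (delta i.-1 * (dseq delta i.-1 %/ dseq delta i)) - Posz (delta i))%R.

(* M_1 = -delta_1, M_i = M_{i-1} + q_i, i.e. M_k = -delta_1 + sum_{i=2}^k q_i *)
Definition Mseq (delta : nat -> nat) (k : nat) : int :=
  (- Posz (delta 1%N) + \sum_(2 <= i < k.+1) qseq delta i)%R.

(* Main.v *)
Require Import Defs.
From mathcomp Require Import all_boot all_order all_algebra.
From mathcomp Require Import zify ring.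
Import GRing.Theory Num.Theory.

Lemma dseqS delta i : dseq delta i.+1 = gcdn (dseq delta i) (delta i).
Proof. by rewrite /dseq big_ord_recr. Qed.

Lemma dseq_dvd delta m j : (j < m)%N -> (dseq delta m %| delta j)%N.
Proof.
elim: m => // m IH; rewrite ltnS leq_eqVlt => /orP[/eqP->|/IH H].
  by rewrite dseqS dvdn_gcdr.
by rewrite dseqS (dvdn_trans (dvdn_gcdl _ _) H).
Qed.

Lemma PoszS (lo hi : nat) (F : nat -> nat) :
  Posz (\sum_(lo <= i < hi) F i)%N = (\sum_(lo <= i < hi) Posz (F i))%R.
Proof. by apply: (big_morph Posz PoszD). Qed.

Lemma nposL delta h j : char_delta_seq delta h -> (1 <= j <= h)%N ->
  [/\ (0 < dseq delta j.+1)%N, (dseq delta j.+1 %| dseq delta j)%N &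
      (0 < dseq delta j %/ dseq delta j.+1)%N].
Proof.
case=> [Hpos [_ [Hdec _]]] Hj.
have dpos : (0 < delta j)%N by apply: Hpos; case/andP: Hj.
have gpos : (0 < dseq delta j.+1)%N by rewrite dseqS gcdn_gt0 dpos orbT.
have gd : (dseq delta j.+1 %| dseq delta j)%N by rewrite dseqS dvdn_gcdl.
split=> //; rewrite divn_gt0 // ltnW //; exact: Hdec.
Qed.

Lemma key delta h : char_delta_seq delta h -> forall m, (1 <= m)%N -> (m <= h.+1)%N ->
  forall (c : nat -> nat) (a0 : int) (a : nat -> int),
  (forall j, (1 <= j < m)%N -> (0 <= a j)%R /\ (a j < Posz (dseq delta j %/ dseq delta j.+1))%R) ->
  Posz (\sum_(0 <= j < m) c j * delta j)%N =
    (a0 * Posz (delta 0%N) + \sum_(1 <= j < m) a j * Posz (delta j))%R ->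
  (0 <= a0)%R.
Proof.
move=> Hch; have [Hpos [_ [Hdec [Hgam _]]]] := Hch.
elim=> // m IH _ Hm c a0 a Ha Heq.
case: (posnP m) => [m0|mpos].
  subst m; move: Heq; rewrite big_nat1 big_geq // addr0 => Heq.
  have d0 : (0 < delta 0%N)%N by apply: Hpos.
  move: Heq; rewrite PoszM => Heq. nia.
have Hgm : (1 <= m <= h)%N by rewrite mpos.
have [gpos gd npos] := @nposL delta h m Hch Hgm.
have dpos : (0 < delta m)%N by apply: Hpos.
move: (dseq delta m) (dseq delta m.+1) gpos gd npos (dseq_dvd delta m) (dseqS delta m) (Hgam m Hgm) (Ha m)
  => d g gpos gd npos dvdd dg [e He] Ham.
set n := d %/ g in npos Ham He.
have rlt := ltn_pmod (c m) npos.
move: (c m %/ n) (c m %% n) rlt (divn_eq (c m) n) => q r rlt Hcm.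
case: He => He.
pose c' := fun j => (c j + q * e j)%N.
have Enat : (\sum_(0 <= j < m.+1) c j * delta j =
    \sum_(0 <= j < m) c' j * delta j + r * delta m)%N.
  rewrite big_nat_recr //= /c'.
  under [X in _ = X + _]eq_bigr do rewrite mulnDl -mulnA.
  rewrite big_split /= -big_distrr /= -He Hcm. ring.
move: Heq; rewrite Enat PoszD PoszM big_nat_recr //=.
set X := (\sum_(0 <= j < m) c' j * delta j)%N.
set Y := (\sum_(1 <= j < m) a j * Posz (delta j))%R.
move=> Heq.
have Hd : (Posz d %| ((Posz r - a m) * Posz (delta m))%R)%Z.
  have -> : ((Posz r - a m) * Posz (delta m) = a0 * Posz (delta 0%N) + Y - Posz X)%R.
    move: Heq; rewrite mulrBl; lia.
  rewrite rpredB // ?rpredD //.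
  - by apply: dvdz_mull; rewrite dvdzE /=; apply: dvdd.
  - rewrite /Y big_nat_cond; apply: rpred_sum => j /andP[/andP[_ Hj] _] /=.
    by apply: dvdz_mull; rewrite dvdzE /=; apply: dvdd.
  - rewrite /X PoszS big_nat_cond; apply: rpred_sum => j /andP[/andP[_ Hj] _] /=.
    by rewrite PoszM; apply: dvdz_mull; rewrite dvdzE /=; apply: dvdd.
have gde : (g %| delta m)%N by rewrite dg dvdn_gcdr.
have cop : coprime (d %/ g) (delta m %/ g).
  rewrite /coprime; apply/eqP.
  have : (gcdn (d %/ g) (delta m %/ g) * g = 1 * g)%N.
    by rewrite muln_gcdl !divnK // -dg mul1n.
  by move/eqP; rewrite eqn_pmul2r // => /eqP.
move: Hd; rewrite dvdzE abszM /= -{1}(divnK gd) -(divnK gde) mulnA dvdn_pmul2r // Gauss_dvdl // => Hn.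
have [a0m alt] : (0 <= a m)%R /\ (a m < Posz n)%R by apply: Ham; rewrite mpos /=.
have ra : Posz r = a m.
  case: (posnP `|(Posz r - a m)%R|%N) => [/eqP|H0].
    by rewrite absz_eq0 subr_eq0 => /eqP.
  have := dvdn_leq H0 Hn; rewrite -/n; lia.
apply: (IH mpos (ltnW Hm) c' a0 a).
  by move=> j /andP[j1 jm]; apply: Ha; rewrite j1 /= ltnS ltnW.
rewrite -/X -/Y; move: Heq; rewrite -ra; lia.
Qed.

Lemma MS delta h k : char_delta_seq delta h -> (1 <= k <= h)%N ->
  (Posz (delta k) + Mseq delta k)%R =
  Posz (\sum_(1 <= j < k) (dseq delta j %/ dseq delta j.+1 - 1) * delta j)%N.
Proof.
move=> Hch; elim: k => // k IH /andP[k1 kh].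
case: (posnP k) => [k0|kpos].
  by subst k; rewrite /Mseq !big_geq //= addr0 addrN.
have IH' := IH (introT andP (conj kpos (ltnW kh))).
have EM : Mseq delta k.+1 = (Mseq delta k + qseq delta k.+1)%R.
  by rewrite /Mseq big_nat_recr //= addrA.
have [_ _ np] := @nposL delta h k Hch (introT andP (conj kpos (ltnW kh))).
rewrite EM /qseq /= big_nat_recr //= PoszD.
move: IH' np; set N := (dseq delta k %/ dseq delta k.+1)%N.
set S := (\sum_(1 <= j < k) _)%N; nia.
Qed.

Theorem lemma7p1 (delta : nat -> nat) (h k : nat) :
  (2 <= h)%N -> char_delta_seq delta h -> (2 <= k <= h)%N ->
  inGamma delta 1 k (Posz (delta k) + Mseq delta k)%R /\
  ~ inGamma delta 0 k (Posz (delta k) + Mseq delta k - Posz (delta 0%N))%R.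
Proof.
move=> h2 Hch /andP[k2 kh].
have k1 : (1 <= k <= h)%N by rewrite kh (leq_trans _ k2).
rewrite (@MS delta h k Hch k1); split.
  by exists (fun j => dseq delta j %/ dseq delta j.+1 - 1)%N.
case=> c Hc.
have := @key delta h Hch k (ltnW k2) (leq_trans kh (leqnSn h)) c (-1)%R
  (fun j => Posz (dseq delta j %/ dseq delta j.+1 - 1)%N).
have H : (0 <= (-1 : int))%R -> False by [].
move=> K; apply: H; apply: K.
  move=> j /andP[j1 jk].
  have [_ _ np] := @nposL delta h j Hch (introT andP (conj j1 (ltnW (leq_trans jk kh)))).
  split=> //; lia.
rewrite -Hc PoszS mulN1r addrC; under eq_bigr do rewrite PoszM; by [].
Qed.
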